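(* Let $n \geq 1$, $m \geq 0$ and $1 \leq j \leq n$ be integers. Then $L(m,j) = \binom{m+j-1}{m}$.
   Context: Six-vertex model: on an $r \times c$ grid ($r$ rows, $c$ columns) there are $r$ horizontal lines and $c$ vertical lines meeting in $rc$ vertices. Each horizontal line consists of $c+1$ edges (the outermost ones are a left and a right boundary edge) and each vertical line of $r+1$ edges (the outermost ones are a top and a bottom boundary edge). A state assigns an orientation to every edge, agreeing with prescribed orientations on the boundary edges, such that at every vertex exactly two of the four adjacent edges point into the vertex and two point out. $L(m,j)$ is the number of states on the grid with $n$ rows and $m+1$ columns, rows numbered $1, \ldots, n$ from top to bottom, with boundary conditions: the top boundary arrow of the leftmost column points up and all other top boundary arrows point down; all bottom boundary arrows point down; all left boundary arrows point right; the right boundary arrow in row $j$ points left and all other right boundary arrows point right. *)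

(* Defs.v *)
From mathcomp Require Import all_boot.
Set Implicit Arguments. Unset Strict Implicit. Unset Printing Implicit Defensive.

(* Six-vertex model on the grid with n rows and c = m+1 columns.
   Rows are indexed by i : 'I_n (row i is row number i+1, counted from the top),
   columns by k : 'I_(m.+1) (from the left).
   Horizontal edges: in row i, edge k : 'I_(m.+2) lies between column k-1 and
   column k; edge 0 is the left boundary edge, edge m+1 the right boundary edge.
   Its orientation h (i,k) is true iff the arrow points RIGHT.
   Vertical edges: in column k, edge i : 'I_(n.+1) lies between row i-1 and
   row i; edge 0 is the top boundary edge, edge n the bottom boundary edge.
   Its orientation v (k,i) is true iff the arrow points DOWN. *)

Definition hor_or (n m : nat) := {ffun 'I_n * 'I_(m.+2) -> bool}.
Definition ver_or (n m : nat) := {ffun 'I_(m.+1) * 'I_(n.+1) -> bool}.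

(* number of the four edges at vertex (i,k) that point INTO the vertex *)
Definition in_count (n m : nat) (h : hor_or n m) (v : ver_or n m)
    (i : 'I_n) (k : 'I_(m.+1)) : nat :=
  h (i, inord k) + ~~ h (i, inord k.+1) + v (k, inord i) + ~~ v (k, inord i.+1).

(* boundary conditions defining L(m,j), with j the (1-based) row whose right
   boundary arrow points left *)
Definition is_state (n m j : nat) (s : hor_or n m * ver_or n m) : bool :=
  let (h, v) := s in
  [&& [forall i : 'I_n, h (i, ord0) == true],
      [forall i : 'I_n, h (i, ord_max) == (i.+1 != j)],       (* right: left only in row j *)
      [forall k : 'I_(m.+1), v (k, ord0) == (k != 0 :> nat)], (* top: up only in column 1 *)
      [forall k : 'I_(m.+1), v (k, ord_max) == true]
    & [forall i : 'I_n, forall k : 'I_(m.+1), in_count h v i k == 2]].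

Definition L (n m j : nat) : nat := #|[pred s : hor_or n m * ver_or n m | is_state j s]|.

(* Main.v *)
Require Import Defs.
From mathcomp Require Import all_boot.
From mathcomp Require Import zify.
Set Implicit Arguments. Unset Strict Implicit. Unset Printing Implicit Defensive.

Definition Vn n m (v : ver_or n.+1 m) (e k : nat) : bool := v (inord k, inord e).
Definition Hn n m (h : hor_or n.+1 m) (i k : nat) : bool := h (inord i, inord k).
Definition Pf n m (v : ver_or n.+1 m) (e K : nat) : nat := \sum_(0 <= k < K) ~~ Vn v e k.
Definition pos n m (v : ver_or n.+1 m) (e : nat) : nat :=
  \sum_(0 <= k < m.+1) (Pf v e k.+1 == 0).

Lemma mono_le (p : nat -> nat) M : (forall k, k < M -> p k <= p k.+1) ->
  forall K, K <= M -> p K <= p M.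
Proof.
elim: M => [|M IH] hm K hK; first by rewrite leqn0 in hK; rewrite (eqP hK).
case: (ltngtP K M.+1) hK => // [hK _|-> //].
apply: leq_trans (hm M (ltnSn M)).
apply: IH => // k hk; apply: hm; lia.
Qed.

Lemma step01 (p : nat -> nat) M : (forall k, k < M -> p k <= p k.+1) ->
  (forall k, k <= M -> p k <= 1) -> p 0 = 0 ->
  \sum_(0 <= k < M) (p k.+1 == 0) <= M /\
  forall K, K <= M -> p K = (\sum_(0 <= k < M) (p k.+1 == 0) < K).
Proof.
elim: M => [|M IH] hm h1 h0.
  by rewrite big_geq //; split => // K; rewrite leqn0 => /eqP ->.
have [IH1 IH2] : \sum_(0 <= k < M) (p k.+1 == 0) <= M /\
  forall K, K <= M -> p K = (\sum_(0 <= k < M) (p k.+1 == 0) < K).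
  apply: IH => // k hk; [apply: hm | apply: h1]; lia.
rewrite big_nat_recr //=.
set c := \sum_(0 <= k < M) (p k.+1 == 0) in IH1 IH2 *.
have hM := IH2 M (leqnn M).
have hmM := hm M (ltnSn M).
have h1M := h1 M.+1 (leqnn _).
have -> : (p M.+1 == 0) = (p M.+1 < 1) by case: (p M.+1).
split; first lia.
move=> K hK; case: (ltngtP K M.+1) hK => // [hK _|-> _]; last lia.
rewrite IH2; lia.
Qed.

Lemma Pf_S n m (v : ver_or n.+1 m) e K : Pf v e K.+1 = Pf v e K + ~~ Vn v e K.
Proof. by rewrite /Pf big_nat_recr. Qed.

Lemma Pf0 n m (v : ver_or n.+1 m) e : Pf v e 0 = 0.
Proof. by rewrite /Pf big_geq. Qed.

Lemma inord_ord0 k : inord 0 = (ord0 : 'I_k.+1).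
Proof. by apply/val_inj; rewrite /= inordK. Qed.

Lemma inord_ordmax k : inord k = (ord_max : 'I_k.+1).
Proof. by apply/val_inj; rewrite /= inordK. Qed.


Lemma ice_nat n m j (h : hor_or n.+1 m) (v : ver_or n.+1 m) :
  is_state j (h, v) -> forall i k, i < n.+1 -> k < m.+1 ->
  Hn h i k + ~~ Hn h i k.+1 + Vn v i k + ~~ Vn v i.+1 k = 2.
Proof.
rewrite /is_state => /and5P [_ _ _ _ /forallP Hice] i k hi hk.
have /forallP /(_ (inord k)) /eqP := Hice (inord i).
by rewrite /in_count /Hn /Vn !inordK.
Qed.

Lemma row_eq n m j (h : hor_or n.+1 m) (v : ver_or n.+1 m) :
  is_state j (h, v) -> forall i K, i < n.+1 -> K <= m.+1 ->
  Hn h i K + Pf v i K = 1 + Pf v i.+1 K.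
Proof.
move=> Hs i K hi; elim: K => [|K IH] hK.
  rewrite !Pf0; move: Hs; rewrite /is_state => /and5P [/forallP Hl _ _ _ _].
  by rewrite /Hn inord_ord0 (eqP (Hl _)).
have := ice_nat Hs hi hK; rewrite !Pf_S.
have := IH (ltnW hK); lia.
Qed.

Lemma Pf_top n m j (h : hor_or n.+1 m) (v : ver_or n.+1 m) :
  is_state j (h, v) -> forall K, K <= m.+1 -> Pf v 0 K = (0 < K).
Proof.
rewrite /is_state => /and5P [_ _ /forallP Ht _ _].
elim=> [|K IH] hK; first by rewrite Pf0.
rewrite Pf_S IH ?(ltnW hK) // /Vn inord_ord0 (eqP (Ht _)) inordK //.
by case: K {IH hK}.
Qed.

Lemma Hn_right n m j (h : hor_or n.+1 m) (v : ver_or n.+1 m) :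
  is_state j (h, v) -> forall i, i < n.+1 -> Hn h i m.+1 = (i.+1 != j).
Proof.
rewrite /is_state => /and5P [_ /forallP Hr _ _ _] i hi.
by rewrite /Hn inord_ordmax (eqP (Hr _)) inordK.
Qed.

Lemma Hn_le1 n m (h : hor_or n.+1 m) i K : Hn h i K <= 1.
Proof. by case: (Hn h i K). Qed.

Lemma Pf_tot n m j (h : hor_or n.+1 m) (v : ver_or n.+1 m) :
  is_state j (h, v) -> 0 < j -> forall e, e <= n.+1 -> Pf v e m.+1 = (e < j).
Proof.
move=> Hs hj; elim=> [|e IH] he; first by rewrite (Pf_top Hs) // hj.
have := row_eq Hs he (leqnn _); rewrite (Hn_right Hs he) IH ?(ltnW he) //.
lia.
Qed.

Lemma Pf_form n m j (h : hor_or n.+1 m) (v : ver_or n.+1 m) :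
  is_state j (h, v) -> 0 < j -> forall e K, e <= n.+1 -> K <= m.+1 ->
  Pf v e K = (e < j) && (pos v e < K).
Proof.
move=> Hs hj e K he hK.
have hmono : forall k, k < m.+1 -> Pf v e k <= Pf v e k.+1.
  by move=> k _; rewrite Pf_S leq_addr.
have HM := Pf_tot Hs hj he.
have h1 : forall k, k <= m.+1 -> Pf v e k <= 1.
  move=> k hk; have := mono_le hmono hk; rewrite HM; lia.
have [_ H] := @step01 (Pf v e) m.+1 hmono h1 (Pf0 v e).
have := H _ (leqnn _); have := H _ hK; rewrite -/(pos v e).
move=> H1 H2; have := mono_le hmono hK; lia.
Qed.

Lemma Vn_form n m j (h : hor_or n.+1 m) (v : ver_or n.+1 m) :
  is_state j (h, v) -> 0 < j -> forall e k, e <= n.+1 -> k < m.+1 ->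
  Vn v e k = ~~ ((e < j) && (k == pos v e)).
Proof.
move=> Hs hj e k he hk.
have := Pf_S v e k; rewrite (Pf_form Hs hj he hk) (Pf_form Hs hj he (ltnW hk)).
case: (Vn v e k); lia.
Qed.

Lemma Hn_form n m j (h : hor_or n.+1 m) (v : ver_or n.+1 m) :
  is_state j (h, v) -> 0 < j -> forall i K, i < n.+1 -> K <= m.+1 ->
  Hn h i K = ~~ ((i < j) && (pos v i < K)) || ((i.+1 < j) && (pos v i.+1 < K)).
Proof.
move=> Hs hj i K hi hK.
have := row_eq Hs hi hK; rewrite (Pf_form Hs hj (ltnW hi) hK) (Pf_form Hs hj hi hK).
case: (Hn h i K); lia.
Qed.

Lemma pos_lt n m j (h : hor_or n.+1 m) (v : ver_or n.+1 m) :
  is_state j (h, v) -> 0 < j -> forall e, e < j -> e <= n.+1 -> pos v e < m.+1.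
Proof.
move=> Hs hj e hej he; have := Pf_tot Hs hj he.
rewrite (Pf_form Hs hj he (leqnn _)); lia.
Qed.

Lemma pos0 n m j (h : hor_or n.+1 m) (v : ver_or n.+1 m) :
  is_state j (h, v) -> 0 < j -> pos v 0 = 0.
Proof.
move=> Hs hj; have := Pf_top Hs (ltn0Sn m).
rewrite (Pf_form Hs hj (leq0n _) (ltn0Sn m)); lia.
Qed.

Lemma pos_mono n m j (h : hor_or n.+1 m) (v : ver_or n.+1 m) :
  is_state j (h, v) -> 0 < j -> j <= n.+1 -> forall e, e.+1 < j ->
  pos v e <= pos v e.+1.
Proof.
move=> Hs hj hjn e he.
have hl := pos_lt Hs hj he (ltnW (leq_trans he hjn)).
have hi : e < n.+1 by lia.
have := row_eq Hs hi hl.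
rewrite (Pf_form Hs hj (ltnW hi) hl) (Pf_form Hs hj hi hl).
have := Hn_le1 h e (pos v e.+1).+1; lia.
Qed.

Definition cc m r (t : r.-tuple 'I_m.+1) (e : nat) : nat :=
  if e is e'.+1 then nth 0 (map val t) e' else 0.

Arguments cc : simpl never.

Lemma cc_lt m r (t : r.-tuple 'I_m.+1) e : cc t e < m.+1.
Proof.
case: e => [|e]; rewrite /cc //; case: (ltnP e (size t)) => he.
  by rewrite (nth_map ord0) //; apply: ltn_ord.
by rewrite nth_default ?size_map.
Qed.

Definition gmap n m j (t : j.-1.-tuple 'I_m.+1) : hor_or n m * ver_or n m :=
  ([ffun p : 'I_n * 'I_m.+2 =>
      ~~ ((p.1 < j) && (cc t p.1 < p.2)) || ((p.1.+1 < j) && (cc t p.1.+1 < p.2))],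
   [ffun p : 'I_m.+1 * 'I_n.+1 => ~~ ((p.2 < j) && (p.1 == cc t p.2 :> nat))]).

Definition fmap n m j (s : hor_or n.+1 m * ver_or n.+1 m) : j.-1.-tuple 'I_m.+1 :=
  [tuple (inord (pos s.2 i.+1) : 'I_m.+1) | i < j.-1].

Lemma cc_mono m j (t : j.-1.-tuple 'I_m.+1) : sorted leq (map val t) ->
  forall e, e.+1 < j -> cc t e <= cc t e.+1.
Proof.
move=> /(sortedP 0) Hs [|e] he; rewrite /cc //.
apply: Hs; rewrite size_map size_tuple; lia.
Qed.

Lemma gmap_state n m j (t : j.-1.-tuple 'I_m.+1) : 0 < j <= n ->
  sorted leq (map val t) -> is_state j (gmap n t).
Proof.
move=> /andP [hj hjn] Hs; rewrite /is_state /gmap; apply/and5P; split.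
- by apply/forallP => i; rewrite ffunE /= ltn0 andbF.
- apply/forallP => i; rewrite ffunE /=; apply/eqP.
  have := cc_lt t i; have := cc_lt t i.+1; lia.
- by apply/forallP => k; rewrite ffunE /= hj.
- apply/forallP => k; rewrite ffunE /=; apply/eqP; lia.
- apply/forallP => i; apply/forallP => k; rewrite /in_count !ffunE /= !inordK //;
    try (have := ltn_ord i; have := ltn_ord k; lia).
  have := @cc_mono m j t Hs i; lia.
Qed.

Lemma fmap_nth n m j (s : hor_or n.+1 m * ver_or n.+1 m) i : i < j.-1 ->
  nth ord0 (@fmap n m j s) i = inord (pos s.2 i.+1).
Proof.
move=> hi; have /= := @nth_mktuple _ _ (fun i : 'I_j.-1 => (inord (pos s.2 i.+1) : 'I_m.+1)) ord0 (Ordinal hi).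
by [].
Qed.

Lemma ccf n m j (h : hor_or n.+1 m) (v : ver_or n.+1 m) :
  is_state j (h, v) -> 0 < j -> j <= n.+1 -> forall e, e < j ->
  cc (@fmap n m j (h, v)) e = pos v e.
Proof.
move=> Hs hj hjn [|e] he; first by rewrite (pos0 Hs hj).
rewrite /cc (nth_map ord0) ?size_tuple; last lia.
rewrite fmap_nth; last lia.
apply: inordK; apply: (pos_lt Hs hj he); lia.
Qed.

Theorem lemma2 (n m j : nat) : 1 <= n -> 1 <= j <= n -> L n m j = 'C(m + j - 1, m).
Proof.
case: n => [//|n] _ /andP [hj hjn].
set T := [set t : j.-1.-tuple 'I_m.+1 | sorted leq (map val t)].
have inj : {in T &, injective (@gmap n.+1 m j)}.
  move=> t1 t2 _ _ /(congr1 snd) /= Hv.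
  have key : forall i, i < j.-1 -> cc t1 i.+1 = cc t2 i.+1.
    move=> i hi.
    have := congr1 (fun f : ver_or n.+1 m => f (inord (cc t1 i.+1), inord i.+1)) Hv.
    rewrite !ffunE /= !inordK ?cc_lt //; last lia.
    lia.
  apply/val_inj/(@eq_from_nth _ ord0); rewrite ?size_tuple // => i hi.
  apply/val_inj; have := key i hi; rewrite /cc !(nth_map ord0) ?size_tuple //.
have eqS : [pred s | is_state j s] =i @gmap n.+1 m j @: T.
  move=> [h v]; rewrite inE; apply/idP/imsetP.
  - move=> Hs; exists (@fmap n m j (h, v)).
      rewrite inE; apply/(sortedP 0) => i; rewrite size_map size_tuple => hi.
      change (cc (@fmap n m j (h, v)) i.+1 <= cc (@fmap n m j (h, v)) i.+2).
      rewrite !(ccf Hs hj hjn); try lia.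
      apply: (pos_mono Hs hj hjn); lia.
    rewrite /gmap; congr pair; apply/ffunP => [[i k]]; rewrite ffunE /=.
      have := Hn_form Hs hj (ltn_ord i) (ltn_ord k); rewrite /Hn !inord_val => ->.
      have E1 := @ccf n m j h v Hs hj hjn i.
      have E2 := @ccf n m j h v Hs hj hjn i.+1.
      lia.
    have := Vn_form Hs hj (ltn_ord k) (ltn_ord i); rewrite /Vn !inord_val => ->.
    have E1 := @ccf n m j h v Hs hj hjn k.
    lia.
  - by case=> t; rewrite inE => Ht ->; apply: gmap_state => //; rewrite hj.
rewrite /L (eq_card eqS) (card_in_imset inj) card_sorted_tuples.
have -> : m + j - 1 = j.-1 + m by lia.
rewrite -[in LHS]bin_sub ?addKn //; lia.
Qed.
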